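(* In a Douglian pre-Hilbert $*$-category, every contraction has a codilator.
   Context: A $*$-category is a category with a choice of $f^*\colon Y\to X$ for each $f\colon X\to Y$ such that $1^*=1$, $(gf)^*=f^*g^*$, $(f^* )^*=f$; $f$ is an isometry if $f^*f=1$. A pre-Hilbert $*$-category is a $*$-category with (R1) a zero object, (R2) orthonormal biproducts of all pairs of objects (biproducts $(X,s_1,r_1,s_2,r_2)$ with $r_k=s_k^*$), (R3) an isometric kernel for every morphism, and (R4) every diagonal $\Delta\colon X\to X\oplus X$ a kernel of some morphism. Such a category is additive. For Hermitian endomorphisms $a,b$ of $A$, $a\leq b$ means $b-a=y^*y$ for some $y\colon A\to Y$. A morphism $f$ is a contraction if $f^*f\leq 1$. A morphism $f\colon A\to X$ is Douglian if for every morphism $g\colon A\to Y$ with $g^*g=f^*f$ there exists $h\colon X\to Y$ with $hf=g$; a pre-Hilbert $*$-category is Douglian if all its morphisms are Douglian. A codilation of $f\colon X\to Y$ is a cospan $(T,t_1,t_2)$ with $t_1\colon X\to T$, $t_2\colon Y\to T$ isometries and $t_2^*t_1=f$. A codilator of $f$ is a codilation $(S,s_1,s_2)$ such that for every codilation $(T,t_1,t_2)$ of $f$ there is a unique isometry $t\colon S\to T$ with $ts_1=t_1$ and $ts_2=t_2$. *)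

(* Defs.v *)
Set Implicit Arguments.
Unset Strict Implicit.

Record StarCat := {
  Ob :> Type;
  Hom : Ob -> Ob -> Type;
  comp : forall X Y Z : Ob, Hom Y Z -> Hom X Y -> Hom X Z;
  idm : forall X : Ob, Hom X X;
  star : forall X Y : Ob, Hom X Y -> Hom Y X;
  comp_assoc : forall (W X Y Z : Ob) (h : Hom Y Z) (g : Hom X Y) (f : Hom W X),
      comp h (comp g f) = comp (comp h g) f;
  comp_id_l : forall (X Y : Ob) (f : Hom X Y), comp (idm Y) f = f;
  comp_id_r : forall (X Y : Ob) (f : Hom X Y), comp f (idm X) = f;
  star_id : forall X : Ob, star (idm X) = idm X;
  star_comp : forall (X Y Z : Ob) (g : Hom Y Z) (f : Hom X Y),
      star (comp g f) = comp (star f) (star g);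
  star_star : forall (X Y : Ob) (f : Hom X Y), star (star f) = f
}.

Arguments comp {C X Y Z} g f : rename.
Arguments idm {C} X : rename.
Arguments star {C X Y} f : rename.

Section Defs.
Variable C : StarCat.

Definition isometry (X Y : C) (f : Hom X Y) : Prop :=
  comp (star f) f = idm X.

Definition is_zero_obj (Z : C) : Prop :=
  (forall X : C, exists f : Hom X Z, forall g : Hom X Z, g = f) /\
  (forall X : C, exists f : Hom Z X, forall g : Hom Z X, g = f).

Definition is_zero_mor (X Y : C) (f : Hom X Y) : Prop :=
  exists (Z : C) (a : Hom X Z) (b : Hom Z Y), is_zero_obj Z /\ f = comp b a.

Definition is_biproduct (X Y P : C) (s1 : Hom X P) (r1 : Hom P X)
    (s2 : Hom Y P) (r2 : Hom P Y) : Prop :=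
  comp r1 s1 = idm X /\ comp r2 s2 = idm Y /\
  is_zero_mor (comp r2 s1) /\ is_zero_mor (comp r1 s2) /\
  (forall (W : C) (f : Hom W X) (g : Hom W Y),
      exists u : Hom W P, comp r1 u = f /\ comp r2 u = g /\
        forall u' : Hom W P, comp r1 u' = f -> comp r2 u' = g -> u' = u) /\
  (forall (W : C) (f : Hom X W) (g : Hom Y W),
      exists v : Hom P W, comp v s1 = f /\ comp v s2 = g /\
        forall v' : Hom P W, comp v' s1 = f -> comp v' s2 = g -> v' = v).

Definition is_orthonormal_biproduct (X Y P : C) (s1 : Hom X P) (s2 : Hom Y P)
  : Prop := is_biproduct s1 (star s1) s2 (star s2).

Definition is_kernel (X Y K : C) (f : Hom X Y) (k : Hom K X) : Prop :=
  is_zero_mor (comp f k) /\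
  forall (W : C) (g : Hom W X), is_zero_mor (comp f g) ->
    exists u : Hom W K, comp k u = g /\
      forall u' : Hom W K, comp k u' = g -> u' = u.

Definition pre_hilbert : Prop :=
  (exists Z : C, is_zero_obj Z) /\
  (forall X Y : C, exists (P : C) (s1 : Hom X P) (s2 : Hom Y P),
      is_orthonormal_biproduct s1 s2) /\
  (forall (X Y : C) (f : Hom X Y), exists (K : C) (k : Hom K X),
      is_kernel f k /\ isometry k) /\
  (* (R4): every diagonal X -> X (+) X is a kernel of some morphism *)
  (forall (X P : C) (s1 s2 : Hom X P), is_orthonormal_biproduct s1 s2 ->
     forall d : Hom X P, comp (star s1) d = idm X -> comp (star s2) d = idm X ->
     exists (Z : C) (g : Hom P Z), is_kernel g d).

(** The canonical sum in the additive structure: h = f + g, i.e.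
    h = nabla o <f, g> computed through a biproduct B (+) B. *)
Definition is_sum (A B : C) (f g h : Hom A B) : Prop :=
  exists (P : C) (s1 : Hom B P) (r1 : Hom P B) (s2 : Hom B P) (r2 : Hom P B)
         (u : Hom A P) (v : Hom P B),
    is_biproduct s1 r1 s2 r2 /\
    comp r1 u = f /\ comp r2 u = g /\
    comp v s1 = idm B /\ comp v s2 = idm B /\
    h = comp v u.

(** a <= b  iff  b - a = y^* y for some y, i.e. b = a + y^* y. *)
Definition hle (A : C) (a b : Hom A A) : Prop :=
  exists (Y : C) (y : Hom A Y), is_sum a (comp (star y) y) b.

Definition contraction (X Y : C) (f : Hom X Y) : Prop :=
  hle (comp (star f) f) (idm X).

Definition douglian_mor (A X : C) (f : Hom A X) : Prop :=
  forall (Y : C) (g : Hom A Y), comp (star g) g = comp (star f) f ->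
    exists h : Hom X Y, comp h f = g.

Definition douglian : Prop :=
  pre_hilbert /\ forall (A X : C) (f : Hom A X), douglian_mor f.

Definition is_codilation (X Y T : C) (f : Hom X Y) (t1 : Hom X T) (t2 : Hom Y T)
  : Prop := isometry t1 /\ isometry t2 /\ comp (star t2) t1 = f.

Definition is_codilator (X Y S : C) (f : Hom X Y) (s1 : Hom X S) (s2 : Hom Y S)
  : Prop :=
  is_codilation f s1 s2 /\
  forall (T : C) (t1 : Hom X T) (t2 : Hom Y T), is_codilation f t1 t2 ->
    exists t : Hom S T, isometry t /\ comp t s1 = t1 /\ comp t s2 = t2 /\
      forall t' : Hom S T, isometry t' -> comp t' s1 = t1 -> comp t' s2 = t2 ->
        t' = t.

Definition has_codilator (X Y : C) (f : Hom X Y) : Prop :=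
  exists (S : C) (s1 : Hom X S) (s2 : Hom Y S), is_codilator f s1 s2.

End Defs.

(* Main.v *)
Require Import Defs.
Set Implicit Arguments.
Unset Strict Implicit.

Section Aux.
Local Notation "g @ f" := (comp g f) (at level 40, left associativity).

Lemma zero_l (C : StarCat) (X Y Z : C) (f : Hom X Y) (g : Hom Y Z) :
  is_zero_mor f -> is_zero_mor (g @ f).
Proof.
  intros [Q [a [b [HQ ->]]]]. exists Q, a, (g @ b). split; auto.
  now rewrite comp_assoc.
Qed.

Lemma zero_r (C : StarCat) (X Y Z : C) (f : Hom X Y) (g : Hom Y Z) :
  is_zero_mor g -> is_zero_mor (g @ f).
Proof.
  intros [Q [a [b [HQ ->]]]]. exists Q, (a @ f), b. split; auto.
  now rewrite comp_assoc.
Qed.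

Lemma zero_star (C : StarCat) (X Y : C) (f : Hom X Y) :
  is_zero_mor f -> is_zero_mor (star f).
Proof.
  intros [Q [a [b [HQ ->]]]]. exists Q, (star b), (star a). split; auto.
  now rewrite star_comp.
Qed.

Lemma zero_unstar (C : StarCat) (X Y : C) (f : Hom X Y) :
  is_zero_mor (star f) -> is_zero_mor f.
Proof.
  intro H. rewrite <- (star_star f). now apply zero_star.
Qed.

Lemma zero_uniq (C : StarCat) (X Y : C) (f f' : Hom X Y) :
  is_zero_mor f -> is_zero_mor f' -> f = f'.
Proof.
  intros [Q [a [b [[HQ1 HQ2] ->]]]] [Q' [a' [b' [[HQ1' HQ2'] ->]]]].
  destruct (HQ2 Q') as [phi Hphi].
  destruct (HQ2 Y) as [bb Hbb].
  destruct (HQ1' X) as [aa Haa].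
  assert (E1 : b = b' @ phi) by (rewrite (Hbb b), (Hbb (b' @ phi)); auto).
  assert (E2 : phi @ a = a') by (rewrite (Haa (phi @ a)), (Haa a'); auto).
  rewrite E1, <- comp_assoc, E2. reflexivity.
Qed.

Lemma prod_uniq (C : StarCat) (X Y P W : C) (s1 : Hom X P) (r1 : Hom P X)
  (s2 : Hom Y P) (r2 : Hom P Y) (u u' : Hom W P) :
  is_biproduct s1 r1 s2 r2 -> r1 @ u = r1 @ u' -> r2 @ u = r2 @ u' -> u = u'.
Proof.
  intros (_ & _ & _ & _ & Hp & _) E1 E2.
  destruct (Hp W (r1 @ u) (r2 @ u)) as [w [_ [_ Hw]]].
  rewrite (Hw u), (Hw u'); auto.
Qed.

Lemma coprod_uniq (C : StarCat) (X Y P W : C) (s1 : Hom X P) (r1 : Hom P X)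
  (s2 : Hom Y P) (r2 : Hom P Y) (v v' : Hom P W) :
  is_biproduct s1 r1 s2 r2 -> v @ s1 = v' @ s1 -> v @ s2 = v' @ s2 -> v = v'.
Proof.
  intros (_ & _ & _ & _ & _ & Hc) E1 E2.
  destruct (Hc W (v @ s1) (v @ s2)) as [w [_ [_ Hw]]].
  rewrite (Hw v), (Hw v'); auto.
Qed.

Lemma comp4 (C : StarCat) (X Y A T : C) (c : Hom A T) (i : Hom X A) (j : Hom Y A) :
  star j @ (star c @ c @ i) = star (c @ j) @ (c @ i).
Proof. rewrite !star_comp, !comp_assoc. reflexivity. Qed.

Lemma sw (C : StarCat) (X Y Z : C) (a : Hom X Y) (b : Hom Z Y) :
  star a @ b = star (star b @ a).
Proof. rewrite star_comp, star_star. reflexivity. Qed.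

Lemma gram_unique (C : StarCat) (X Y A T T' : C) (iX : Hom X A) (iY : Hom Y A)
  (c : Hom A T) (c' : Hom A T') :
  is_orthonormal_biproduct iX iY ->
  isometry (c @ iX) -> isometry (c' @ iX) -> isometry (c @ iY) -> isometry (c' @ iY) ->
  star (c @ iY) @ (c @ iX) = star (c' @ iY) @ (c' @ iX) ->
  star c @ c = star c' @ c'.
Proof.
  unfold isometry. intros HB H1 H1' H2 H2' H3.
  eapply coprod_uniq; [exact HB| |]; eapply prod_uniq; try exact HB;
  rewrite ?comp4.
  - rewrite H1, H1'; reflexivity.
  - exact H3.
  - rewrite (sw (c @ iX)), (sw (c' @ iX)), H3. reflexivity.
  - rewrite H2, H2'; reflexivity.
Qed.

Lemma iso_mono (C : StarCat) (X Y W : C) (j : Hom X Y) (a b : Hom W X) :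
  isometry j -> j @ a = j @ b -> a = b.
Proof.
  unfold isometry; intros Hj E.
  rewrite <- (comp_id_l a), <- (comp_id_l b), <- Hj, <- !comp_assoc, E. reflexivity.
Qed.

Lemma epi_of_zero_epi (C : StarCat) (HP : pre_hilbert C) (A M : C) (e : Hom A M) :
  (forall (W : C) (a : Hom M W), is_zero_mor (a @ e) -> is_zero_mor a) ->
  forall (W : C) (a b : Hom M W), a @ e = b @ e -> a = b.
Proof.
  intros Hz W a b Eab.
  destruct HP as (_ & R2 & R3 & R4).
  destruct (R2 W W) as (P & s1 & s2 & HB).
  pose proof HB as HB'.
  destruct HB' as (Hs1 & Hs2 & _ & _ & Hp & _).
  destruct (Hp W (idm W) (idm W)) as (d & Hd1 & Hd2 & _).
  destruct (R4 W P s1 s2 HB d Hd1 Hd2) as (Z & q & [Hqd Hqk]).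
  destruct (Hp M a b) as (u & Hu1 & Hu2 & _).
  destruct (R3 M Z (q @ u)) as (E & j & [Hjz Hjk] & Hj).
  assert (Hu : is_zero_mor (q @ (u @ j))) by (rewrite comp_assoc; exact Hjz).
  destruct (Hqk E (u @ j) Hu) as (c' & Hc' & _).
  assert (Eabj : a @ j = b @ j).
  { rewrite <- Hu1, <- Hu2, <- !comp_assoc, <- Hc', !comp_assoc, Hd1, Hd2. reflexivity. }
  assert (Hue : u @ e = d @ (a @ e)).
  { eapply prod_uniq; [exact HB| |]; rewrite !comp_assoc.
    - rewrite Hu1, Hd1, comp_id_l; reflexivity.
    - rewrite Hu2, Hd2, comp_id_l; auto. }
  assert (Hre : is_zero_mor (q @ u @ e)).
  { rewrite <- comp_assoc, Hue, comp_assoc. apply zero_r. exact Hqd. }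
  destruct (Hjk A e Hre) as (e' & He' & _).
  (* orthocomplement of j *)
  destruct (R3 M E (star j)) as (L & jp & [Hjpz Hjpk] & _).
  assert (Hz1 : is_zero_mor (star jp @ e)).
  { rewrite <- He', comp_assoc. apply zero_r.
    rewrite <- (star_star j), <- star_comp. apply zero_star. exact Hjpz. }
  apply Hz in Hz1. apply zero_unstar in Hz1.
  assert (Hr : is_zero_mor (star j @ star (q @ u))).
  { rewrite <- star_comp. apply zero_star. exact Hjz. }
  destruct (Hjpk Z (star (q @ u)) Hr) as (cc & Hcc & _).
  assert (Hr0 : is_zero_mor (q @ u)).
  { apply zero_unstar. rewrite <- Hcc. apply zero_r. exact Hz1. }
  assert (Hr1 : is_zero_mor (q @ u @ idm M)) by (apply zero_r; exact Hr0).
  destruct (Hjk M (idm M) Hr1) as (w & Hw & _).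
  rewrite <- (comp_id_r a), <- (comp_id_r b), <- Hw, !comp_assoc, Eabj. reflexivity.
Qed.

End Aux.

Local Notation "g @ f" := (comp g f) (at level 40, left associativity).

Theorem corollary7p17 (C : StarCat) (HC : douglian C)
  (X Y : C) (f : Hom X Y) (Hf : contraction f) : has_codilator f.
Proof.
  destruct HC as [HP Dg].
  pose proof HP as (R1 & R2 & R3 & R4).
  (* Step 1: an initial codilation *)
  destruct Hf as (Z & y & P & s1 & r1 & s2 & r2 & u & v & HBP & Hu1 & Hu2 & Hv1 & Hv2 & Hvu).
  destruct (R2 Y Z) as (T0 & sY & sZ & HB0).
  pose proof HB0 as (HsY & HsZ & HzZY & HzYZ & Hp0 & Hc0).
  destruct (Hp0 X f y) as (t1 & Ht1f & Ht1y & _).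
  destruct (Hc0 P (s1 @ star f) (s2 @ star y)) as (w & HwY & HwZ & _).
  pose proof HBP as (Hrs1 & Hrs2 & Hz21 & Hz12 & _ & _).
  assert (Hvw : v @ w = star t1).
  { eapply coprod_uniq; [exact HB0| |].
    - rewrite <- comp_assoc, HwY, comp_assoc, Hv1, comp_id_l.
      rewrite <- (star_star sY), <- star_comp, Ht1f. reflexivity.
    - rewrite <- comp_assoc, HwZ, comp_assoc, Hv2, comp_id_l.
      rewrite <- (star_star sZ), <- star_comp, Ht1y. reflexivity. }
  assert (Hr1w : r1 @ w = star f @ star sY).
  { eapply coprod_uniq; [exact HB0| |].
    - rewrite <- !comp_assoc, HwY, HsY, comp_assoc, Hrs1, comp_id_l, comp_id_r. reflexivity.
    - rewrite <- !comp_assoc, HwZ, comp_assoc. apply zero_uniq.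
      + apply zero_r. exact Hz12.
      + apply zero_l. exact HzYZ. }
  assert (Hr2w : r2 @ w = star y @ star sZ).
  { eapply coprod_uniq; [exact HB0| |].
    - rewrite <- !comp_assoc, HwY, comp_assoc. apply zero_uniq.
      + apply zero_r. exact Hz21.
      + apply zero_l. exact HzZY.
    - rewrite <- !comp_assoc, HwZ, HsZ, comp_assoc, Hrs2, comp_id_l, comp_id_r. reflexivity. }
  assert (Hwt : w @ t1 = u).
  { eapply prod_uniq; [exact HBP| |]; rewrite comp_assoc.
    - rewrite Hr1w, <- comp_assoc, Ht1f, Hu1. reflexivity.
    - rewrite Hr2w, <- comp_assoc, Ht1y, Hu2. reflexivity. }
  assert (Ht1 : isometry t1).
  { unfold isometry. rewrite <- Hvw, <- comp_assoc, Hwt. symmetry. exact Hvu. }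
  destruct (R2 X Y) as (A & iX & iY & HBA).
  pose proof HBA as (HiX & HiY & _ & _ & _ & HcA).
  destruct (HcA T0 t1 sY) as (c0 & Hc0X & Hc0Y & _).
  (* Step 3: image factorization *)
  destruct (R3 T0 A (star c0)) as (K & k & [Hkz Hkk] & Hk).
  destruct (R3 T0 K (star k)) as (M & m & [Hmz Hmk] & Hm).
  assert (Hkc : is_zero_mor (star k @ c0)).
  { rewrite <- (star_star c0), <- star_comp. apply zero_star. exact Hkz. }
  destruct (Hmk A c0 Hkc) as (e & He & _).
  assert (Hgram : star e @ e = star c0 @ c0).
  { rewrite <- He, star_comp, <- comp_assoc, (comp_assoc (star m)), Hm, comp_id_l.
    reflexivity. }
  assert (Hze : forall (W : C) (a : Hom M W), is_zero_mor (a @ e) -> is_zero_mor a).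
  { intros W a Hae.
    assert (H1 : is_zero_mor (star c0 @ (m @ star a))).
    { rewrite <- He, star_comp, <- comp_assoc, (comp_assoc (star m)), Hm, comp_id_l.
      rewrite <- star_comp. apply zero_star. exact Hae. }
    destruct (Hkk W (m @ star a) H1) as (cc & Hcc & _).
    apply zero_unstar.
    rewrite <- (comp_id_l (star a)), <- Hm, <- comp_assoc, <- Hcc, comp_assoc.
    apply zero_r. rewrite sw. apply zero_star. exact Hmz. }
  pose proof (epi_of_zero_epi HP Hze) as Hepi.
  assert (Hmono : forall (W : C) (a b : Hom W M), star e @ a = star e @ b -> a = b).
  { intros W a b E.
    rewrite <- (star_star a), <- (star_star b). f_equal. apply Hepi.
    rewrite <- (star_star e), <- !star_comp, E. reflexivity. }
  exists M, (e @ iX), (e @ iY).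
  assert (Hcod : is_codilation f (e @ iX) (e @ iY)).
  { unfold is_codilation, isometry.
    rewrite <- !comp4, Hgram, !comp4, Hc0X, Hc0Y. split; [exact Ht1|split; [exact HsY|exact Ht1f]]. }
  split; [exact Hcod|].
  intros T t1' t2' (Hi1 & Hi2 & Hf').
  destruct (HcA T t1' t2') as (c & HcX & HcY & _).
  assert (Hg2 : star c @ c = star e @ e).
  { rewrite Hgram. apply (gram_unique HBA).
    - rewrite HcX; exact Hi1.
    - rewrite Hc0X; exact Ht1.
    - rewrite HcY; exact Hi2.
    - rewrite Hc0Y; exact HsY.
    - rewrite HcX, HcY, Hc0X, Hc0Y, Hf', Ht1f. reflexivity. }
  destruct (Dg A M e T c Hg2) as (h & Hh).
  assert (Hhi : isometry h).
  { unfold isometry. apply Hepi. rewrite comp_id_l. apply Hmono.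
    rewrite <- (comp_assoc (star h) h e), Hh, comp_assoc, <- star_comp, Hh. exact Hg2. }

  exists h. split; [exact Hhi|].
  split; [rewrite comp_assoc, Hh; exact HcX|].
  split; [rewrite comp_assoc, Hh; exact HcY|].
  intros t' _ Ht1' Ht2'.
  apply Hepi. rewrite Hh.
  eapply coprod_uniq; [exact HBA| |]; rewrite <- comp_assoc.
  - rewrite Ht1'; symmetry; exact HcX.
  - rewrite Ht2'; symmetry; exact HcY.
Qed.
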